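(* In a public goods economy (as in the context), if an outcome $\mathbf{a}$ is Pareto efficient, then every deviation $\mathbf{a}'$ from $\mathbf{a}$ (for any coalition) satisfies $\mathbf{a}'\lneq\mathbf{a}$.
   Context: Agents $N=\{1,\dots,n\}$; outcomes are vectors in $[0,1]^n$. Vector orderings: $\mathbf{x}\ge\mathbf{y}$ means $x_i\ge y_i$ for all $i$; $\mathbf{x}>\mathbf{y}$ means $x_i>y_i$ for all $i$; $\mathbf{x}\gneq\mathbf{y}$ means $\mathbf{x}\ge\mathbf{y}$ and $x_j>y_j$ for some $j$ (and $\mathbf{x}\lneq\mathbf{y}$ means $\mathbf{y}\gneq\mathbf{x}$). For $C\subseteq N$, $\mathbf{v}_C$ is the restriction of $\mathbf{v}$ to coordinates in $C$. The utility function $\mathbf{u}:[0,1]^n\to[0,1]^n$ is continuous, concave, and has positive externalities: whenever $\mathbf{a}\gneq\mathbf{a}'$ and $a_i=a'_i$, then $u_i(\mathbf{a})>u_i(\mathbf{a}')$. A coalition is a nonempty $C\subseteq N$; $\mathbf{a}'$ is a deviation from $\mathbf{a}$ for $C$ if $\mathbf{a}'_{N\setminus C}=\mathbf{0}$ and $\mathbf{u}_C(\mathbf{a}')>\mathbf{u}_C(\mathbf{a})$. $\mathbf{a}$ is Pareto efficient if there is no outcome $\mathbf{a}''$ with $\mathbf{u}(\mathbf{a}'')\gneq\mathbf{u}(\mathbf{a})$. *)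

(* Defs.v *)
From HB Require Import structures.
From mathcomp Require Import all_boot all_order all_algebra.
From mathcomp Require Import all_classical all_reals all_analysis.
Set Implicit Arguments. Unset Strict Implicit. Unset Printing Implicit Defensive.
Import Order.TTheory GRing.Theory Num.Theory.
Import numFieldNormedType.Exports.
Local Open Scope ring_scope.
Local Open Scope classical_set_scope.

(* Vectors in R^n are row vectors 'rV[R]_n; coordinate i of x is x ord0 i. *)
Section Defs.
Variables (R : realType) (n : nat).
Implicit Types (x y : 'rV[R]_n).

Definition cube : set 'rV[R]_n := [set x | forall i, 0 <= x ord0 i <= 1].

Definition vge x y := forall i : 'I_n, y ord0 i <= x ord0 i.
Definition vgt x y := forall i : 'I_n, y ord0 i < x ord0 i.
Definition vgneq x y := vge x y /\ exists j : 'I_n, y ord0 j < x ord0 j.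
Definition vlneq x y := vgneq y x.

Definition vgt_on (C : {set 'I_n}) x y := forall i, i \in C -> y ord0 i < x ord0 i.

Definition utility_maps_cube (u : 'rV[R]_n -> 'rV[R]_n) :=
  forall a, cube a -> cube (u a).

Definition utility_continuous (u : 'rV[R]_n -> 'rV[R]_n) :=
  {within cube, continuous u}.

Definition utility_concave (u : 'rV[R]_n -> 'rV[R]_n) :=
  forall a b (t : R), cube a -> cube b -> 0 <= t <= 1 ->
    forall i : 'I_n,
      t * u a ord0 i + (1 - t) * u b ord0 i <= u (t *: a + (1 - t) *: b) ord0 i.

Definition positive_externalities (u : 'rV[R]_n -> 'rV[R]_n) :=
  forall a a', cube a -> cube a' -> vgneq a a' ->
    forall i : 'I_n, a ord0 i = a' ord0 i -> u a' ord0 i < u a ord0 i.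

Definition public_goods_utility (u : 'rV[R]_n -> 'rV[R]_n) :=
  [/\ utility_maps_cube u, utility_continuous u, utility_concave u
    & positive_externalities u].

Definition deviation (u : 'rV[R]_n -> 'rV[R]_n) (C : {set 'I_n}) a a' :=
  [/\ C != finset.set0, cube a',
      (forall i, i \notin C -> a' ord0 i = 0)
    & vgt_on C (u a') (u a)].

Definition pareto_efficient (u : 'rV[R]_n -> 'rV[R]_n) a :=
  cube a /\ ~ exists a'', cube a'' /\ vgneq (u a'') (u a).

End Defs.

(* Main.v *)
Require Import Defs.
From HB Require Import structures.
From mathcomp Require Import all_boot all_order all_algebra.
From mathcomp Require Import all_classical all_reals all_analysis.
Import Order.TTheory GRing.Theory Num.Theory.
Local Open Scope ring_scope.

Theorem lemma1 (R : realType) (n : nat) (u : 'rV[R]_n -> 'rV[R]_n)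
  (a : 'rV[R]_n) :
  public_goods_utility u ->
  pareto_efficient u a ->
  forall (C : {set 'I_n}) (a' : 'rV[R]_n), deviation u C a a' -> vlneq a' a.
Proof.
move=> [_ _ _ Hext] [Ha Hpar] C a' [HC Ha' Hout Hgt].
have rowE (x y : 'rV[R]_n) : (forall i, x ord0 i = y ord0 i) -> x = y.
  by move=> H; apply/rowP => i; exact: H.
have Hle : forall i, a' ord0 i <= a ord0 i.
  move=> k; rewrite leNgt; apply/negP => Hk.
  pose b : 'rV[R]_n := \row_i Num.max (a ord0 i) (a' ord0 i).
  have bE i : b ord0 i = Num.max (a ord0 i) (a' ord0 i) by rewrite mxE.
  have Hb : cube b.
    move=> i; rewrite bE; have := Ha i; have := Ha' i.
    case/andP=> h1 h2; case/andP=> h3 h4.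
    by apply/andP; split; rewrite ?le_max ?ge_max ?h1 ?h3 ?h2 ?h4 ?orbT.
  have Hba : vgneq b a.
    split; first by move=> i; rewrite bE le_max lexx.
    by exists k; rewrite bE lt_max Hk orbT.
  have Hall : forall i, u a ord0 i < u b ord0 i.
    move=> i.
    have [hi|hi] := leP (a' ord0 i) (a ord0 i).
      by apply: Hext => //; rewrite bE max_l.
    have iC : i \in C.
      apply/negPn/negP => /Hout h; move: hi; rewrite h.
      by case/andP: (Ha i) => h0 _; rewrite ltNge h0.
    apply: (lt_le_trans (Hgt i iC)).
    have [[j hj]|nj] := pselect (exists j, a' ord0 j < b ord0 j).
      apply: ltW; apply: Hext => //.
        by split; [move=> l; rewrite bE le_max lexx orbT | exists j].
      by rewrite bE max_r ?(ltW hi).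
    have -> : b = a'; last by [].
    apply: rowE => l; apply/eqP; rewrite eq_le; apply/andP; split.
      by rewrite leNgt; apply/negP => h; apply: nj; exists l.
    by rewrite bE le_max lexx orbT.
  apply: Hpar; exists b; split => //; split; last by exists k; apply: Hall.
  by move=> i; apply: ltW.
split => //.
have [[j hj]|nj] := pselect (exists j, a' ord0 j < a ord0 j); first by exists j.
have Heq : a' = a.
  apply: rowE => l; apply/eqP; rewrite eq_le Hle /=.
  by rewrite leNgt; apply/negP => h; apply: nj; exists l.
case/set0Pn: HC => i iC.
by have := Hgt i iC; rewrite Heq ltxx.
Qed.
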